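(* Let $G\subseteq W(\mathsf D_n)$ be a finite group acting on $L=\mathbb Z^{n+2}=\bigoplus_{i=-1}^n\mathbb Z l_i$ via $\Phi$. For $i\in\{-1,0,1,\dots,n\}$ let $f_i:G\to L$ be the coboundary $f_i(g)=\Phi(g)l_i-l_i$. Suppose $I\subseteq\{-1,1,2,\dots,n\}$ is an index set such that $\xi=\frac12\sum_{i\in I}f_i$ is an $L$-valued $1$-cocycle whose class $[\xi]\in\mathrm H^1(G,L)$ is nonzero. Then $-1\notin I$.
   Context: $W(\mathsf B_n)$ is the group of signed permutations of the $2n$ symbols $j^\pm$ ($j=1,\dots,n$), generated by the symmetric group $\mathfrak S_n$ (permuting indices) and the involutions $c_j$ exchanging $j^+$ and $j^-$; every element can be written as $c_{j_1}\cdots c_{j_t}\tau$ with distinct $j_i$ and $\tau\in\mathfrak S_n$. The character $\sigma(c_{j_1}\cdots c_{j_t}\tau)=(-1)^t$ has kernel $W(\mathsf D_n)$. The lattice $L$ with basis $l_{-1},l_0,l_1,\dots,l_n$ models $\mathrm{Pic}(\bar X)$ of a standard conic bundle with $n$ degenerate fibers ($l_0$ the fiber class, $l_j$ a component of the $j$-th degenerate fiber). For $g=c_{j_1}\cdots c_{j_t}\tau\in W(\mathsf D_n)$ ($t$ even), set $s(i)=-1$ if $i\in\{j_1,\dots,j_t\}$ and $s(i)=1$ otherwise; then $\Phi(g)$ is the integral matrix with $\Phi(g)l_0=l_0$, $\Phi(g)l_{-1}=l_{-1}+\frac t2 l_0-\sum_{i:\,s(i)=-1}l_i$, and for $v\ge1$,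 with $u=\tau^{-1}(v)$: $\Phi(g)l_v=l_u$ if $s(u)=1$ and $\Phi(g)l_v=l_0-l_u$ if $s(u)=-1$. *)

(* Defs.v *)
From HB Require Import structures.
From mathcomp Require Import all_boot all_order all_fingroup all_algebra.
Set Implicit Arguments. Unset Strict Implicit. Unset Printing Implicit Defensive.
Import GRing.Theory Num.Theory.
Local Open Scope ring_scope.

(* The 2n symbols j^± are encoded as pairs (j, b) : 'I_n * bool,
   with b = true for j^+ and b = false for j^-.
   Group law: mathcomp's ({perm _}) convention (g * h) x = h (g x). *)
Definition WB (n : nat) : {set {perm ('I_n * bool)}} :=
  [set g : {perm ('I_n * bool)} | [forall x : 'I_n * bool, g (x.1, ~~ x.2) == ((g x).1, ~~ (g x).2)]].

(* Writing g = c_{j1} ... c_{jt} * tau (flips first, then tau), we have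
   g(u^+) = tau(u)^{s(u)}; negs g = {j_1,...,j_t} = {u | s(u) = -1}. *)
Definition negs (n : nat) (g : {perm ('I_n * bool)}) : {set 'I_n} :=
  [set u | ~~ (g (u, true)).2].

(* sigma(g) = (-1)^t ; W(D_n) = kernel of sigma *)
Definition WD (n : nat) : {set {perm ('I_n * bool)}} :=
  [set g in WB n | ~~ odd #|negs g|].

Definition tauinv (n : nat) (g : {perm ('I_n * bool)}) (v : 'I_n) : 'I_n :=
  ((g^-1)%g (v, true)).1.

(* Indices of the basis of L = Z^{n+2}: l_{-1} ~ 0, l_0 ~ 1, l_j ~ j+1 (j=1..n,
   i.e. the ordinal i : 'I_n (i = j-1) corresponds to index i+2). *)
Definition im1 {n : nat} : 'I_(n.+2) := ord0.
Definition i0 {n : nat} : 'I_(n.+2) := lift ord0 ord0.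
Definition ilv {n : nat} (i : 'I_n) : 'I_(n.+2) := lift ord0 (lift ord0 i).

Definition lvec {n : nat} (k : 'I_(n.+2)) : 'cV[int]_(n.+2) := delta_mx k 0.

Definition Phi_lm1 (n : nat) (g : {perm ('I_n * bool)}) : 'cV[int]_(n.+2) :=
  lvec im1 + (#|negs g|./2)%:Z *: lvec i0 - \sum_(i in negs g) lvec (ilv i).

Definition Phi_lv (n : nat) (g : {perm ('I_n * bool)}) (v : 'I_n) : 'cV[int]_(n.+2) :=
  let u := tauinv g v in
  if u \in negs g then lvec i0 - lvec (ilv u) else lvec (ilv u).

Definition Phi (n : nat) (g : {perm ('I_n * bool)}) : 'M[int]_(n.+2) :=
  Phi_lm1 g *m (lvec im1)^T + lvec i0 *m (lvec i0)^T
  + \sum_(v < n) Phi_lv g v *m (lvec (ilv v))^T.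

Definition fcob (n : nat) (i : 'I_(n.+2)) (g : {perm ('I_n * bool)}) : 'cV[int]_(n.+2) :=
  Phi g *m lvec i - lvec i.

(* Main.v *)
Require Import Defs.
From HB Require Import structures.
From mathcomp Require Import all_boot all_order all_fingroup all_algebra.
Import GRing.Theory Num.Theory.
Local Open Scope ring_scope.

Lemma d11 : delta_mx 0 0 = 1 :> 'M[int]_1.
Proof. by apply/matrixP => i j; rewrite !ord1 !mxE. Qed.

Lemma mulT n (A : 'cV[int]_(n.+2)) (j k : 'I_(n.+2)) :
  A *m (lvec j)^T *m lvec k = if j == k then A else 0.
Proof.
rewrite -mulmxA /lvec trmx_delta mul_delta_mx_cond d11.
by case: (j == k); rewrite ?mulmx1 ?mulmx0.
Qed.

Lemma ilv_inj n : injective (@ilv n).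
Proof. by move=> a b /lift_inj /lift_inj. Qed.

Lemma ilv_neq n (i : 'I_n) : (ilv i == im1) = false /\ (ilv i == i0) = false.
Proof. by split; rewrite -val_eqE /= /bump /=. Qed.

Lemma Phi_col n g :
  [/\ Phi g *m lvec im1 = Phi_lm1 g, Phi g *m lvec (@i0 n) = lvec i0 &
      forall w, Phi g *m lvec (ilv w) = Phi_lv g w].
Proof.
have e10 : (@im1 n == i0) = false by [].
have e01 : (@i0 n == im1) = false by [].
split.
- rewrite /Phi !mulmxDl mulmx_suml !mulT eqxx e01 addr0 [\sum_(i < n) _]big1 ?addr0 // => v _.
  by rewrite mulT (ilv_neq _ v).1.
- rewrite /Phi !mulmxDl mulmx_suml !mulT eqxx e10 [\sum_(i < n) _]big1 ?add0r ?addr0 // => v _.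
  by rewrite mulT (ilv_neq _ v).2.
- move=> w; rewrite /Phi !mulmxDl mulmx_suml !mulT ![_ == ilv w]eq_sym (ilv_neq _ w).1 (ilv_neq _ w).2 (bigD1 w) //= mulT eqxx.
  rewrite big1 ?add0r ?addr0 // => v /negbTE nv.
  by rewrite mulT (inj_eq (@ilv_inj n)) nv.
Qed.
From mathcomp Require Import zify.

Definition tau n (g : {perm ('I_n * bool)}) (i : 'I_n) : 'I_n := (g (i, true)).1.
Arguments tau {n}.

Lemma tauinvE n (g : {perm ('I_n * bool)}) :
  (forall x, g (x.1, ~~ x.2) = ((g x).1, ~~ (g x).2)) ->
  forall v i, (tauinv g v == i) = (v == tau g i).
Proof.
move=> hW v i; rewrite /tau; apply/eqP/eqP.
- rewrite /tauinv; case E: (g^-1 (v,true))%g => [j b] /= Ej; subst j.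
  have E1 : g (i, b) = (v, true) by rewrite -E permKV.
  case: b E E1 => E E1; first by rewrite E1.
  by have := hW (i, false); rewrite /= E1 => ->.
- move=> ->; case E: (g (i,true)) => [v' c] /=.
  case: c E => E; first by rewrite /tauinv -E permK.
  have E2 : g (i, false) = (v', true) by have := hW (i, true); rewrite /= E.
  by rewrite /tauinv -E2 permK.
Qed.

Lemma lvecE n (k r : 'I_(n.+2)) : lvec k r 0 = (r == k)%:R.
Proof. by rewrite /lvec mxE eqxx andbT. Qed.

Lemma sum_pick n (P : pred 'I_n) (a : 'I_n) (c : int) :
  \sum_(v | P v) (if v == a then c else 0) = if P a then c else 0.
Proof.
rewrite big_mkcond (bigD1 a) //= eqxx big1 ?addr0 // => v /negbTE ->.
by case: (P v).
Qed.

Lemma sum_pick' n (P : pred 'I_n) (a : 'I_n) (c : int) :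
  \sum_(v | P v) (if a == v then c else 0) = if P a then c else 0.
Proof. by under eq_bigr do rewrite eq_sym; exact: sum_pick. Qed.

Lemma PhiLv_ilv n (g : {perm ('I_n * bool)}) v i :
  Phi_lv g v (ilv i) 0 =
  if tauinv g v == i then (if i \in negs g then -1 else 1) else 0.
Proof.
rewrite /Phi_lv; case: ifP => hn; rewrite ?mxE eqxx !andbT ?(ilv_neq _ i).2 ?sub0r
  (inj_eq (@ilv_inj n)) eq_sym; case: eqP => // <-; by rewrite hn.
Qed.

Lemma PhiLv_im1 n (g : {perm ('I_n * bool)}) v : Phi_lv g v im1 0 = 0.
Proof.
have h : forall u : 'I_n, (im1 == ilv u) = false by move=> u; rewrite eq_sym (ilv_neq _ u).1.
by rewrite /Phi_lv; case: ifP => _; rewrite ?mxE eqxx !andbT ?subrr ?h.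
Qed.

Definition phi n (x : 'cV[int]_(n.+2)) : int := 2 * x i0 0 + \sum_(i < n) x (ilv i) 0.
Arguments phi {n}.

Lemma phiD n (x y : 'cV[int]_(n.+2)) : phi (x + y) = phi x + phi y.
Proof.
rewrite /phi !mxE; under eq_bigr do rewrite mxE.
by rewrite big_split /= mulrDr addrACA.
Qed.

Lemma phiZ n (c : int) (x : 'cV[int]_(n.+2)) : phi (c *: x) = c * phi x.
Proof.
rewrite /phi !mxE; under eq_bigr do rewrite mxE.
by rewrite -mulr_sumr mulrDr mulrCA.
Qed.

Lemma phi0 n : phi (0 : 'cV[int]_(n.+2)) = 0.
Proof. by rewrite -(scale0r (0 : 'cV[int]_(n.+2))) phiZ mul0r. Qed.

Lemma phiB n (x y : 'cV[int]_(n.+2)) : phi (x - y) = phi x - phi y.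
Proof. by rewrite phiD -scaleN1r phiZ mulN1r. Qed.

Lemma phi_sum n (I : finType) (P : pred I) (F : I -> 'cV[int]_(n.+2)) :
  phi (\sum_(i | P i) F i) = \sum_(i | P i) phi (F i).
Proof. exact: (big_morph _ (@phiD n) (@phi0 n)). Qed.

Lemma phi_lvec n (k : 'I_(n.+2)) :
  phi (lvec k) = 2 * (i0 == k)%:R + \sum_(i < n) (ilv i == k)%:R.
Proof. by rewrite /phi lvecE; under eq_bigr do rewrite lvecE. Qed.

Lemma natb (b : bool) : b%:R = (if b then 1 else 0) :> int.
Proof. by case: b. Qed.

Lemma ord2_cases n (r : 'I_(n.+2)) : r = im1 \/ r = i0 \/ exists i, r = ilv i.
Proof.
case: (unliftP ord0 r) => [j ->|->]; last by left.
case: (unliftP ord0 j) => [k ->|->]; last by right; left.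
by right; right; exists k.
Qed.

Lemma phi_lv_ilv n (u : 'I_n) : phi (lvec (ilv u)) = 1.
Proof.
rewrite phi_lvec eq_sym (ilv_neq _ u).2 mulr0 add0r.
under eq_bigr do rewrite (inj_eq (@ilv_inj n)) natb.
by rewrite sum_pick.
Qed.

Lemma phi_lv_i0 n : phi (lvec (@i0 n)) = 2.
Proof.
rewrite phi_lvec eqxx mulr1 big1 ?addr0 //; by move=> i _; rewrite (ilv_neq _ i).2.
Qed.

Lemma phi_lv_im1 n : phi (lvec (@im1 n)) = 0.
Proof.
rewrite phi_lvec big1 ?addr0 //; by move=> i _; rewrite (ilv_neq _ i).1.
Qed.

Lemma phi_Phi_lv n g (v : 'I_n) : phi (Phi_lv g v) = 1.
Proof.
rewrite /Phi_lv; case: ifP => _; rewrite ?phiB phi_lv_ilv ?phi_lv_i0 //.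
Qed.

Lemma phi_Phi_lm1 n g : ~~ odd #|negs g| -> phi (@Phi_lm1 n g) = 0.
Proof.
move=> ev.
rewrite /Phi_lm1 phiB phiD phiZ phi_lv_im1 phi_lv_i0 add0r phi_sum.
under eq_bigr do rewrite phi_lv_ilv.
rewrite sumr_const.
have h := odd_double_half #|negs g|; rewrite (negbTE ev) add0n in h.
set t := #|negs g| in h *; rewrite -{2}h.
rewrite -[(1 : int) *+ _]/(_%:R) -muln2 natrM natz; lia.
Qed.

Lemma fcob_im1_ilv n g (i : 'I_n) :
  fcob im1 g (ilv i) 0 = - (if i \in negs g then 1 else 0).
Proof.
have [c1 _ _] := Phi_col n g.
rewrite /fcob c1 /Phi_lm1 !mxE summxE !(eqxx (0 : 'I_1)) !andbT (ilv_neq _ i).1.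
under eq_bigr do rewrite mxE eqxx andbT (inj_eq (@ilv_inj n)) natb eq_sym.
by rewrite sum_pick mulr0 !add0r subr0.
Qed.

Theorem lemma3p2 (n : nat) (G : {group {perm ('I_n * bool)}}) (I : {set 'I_(n.+2)}) :
  G \subset WD n ->
  (@i0 n) \notin I ->
  (exists xi : {perm ('I_n * bool)} -> 'cV[int]_(n.+2),
     (forall g, g \in G -> 2%:Z *: xi g = \sum_(i in I) fcob i g) /\
     (forall g h, g \in G -> h \in G -> xi (g * h)%g = xi g + Phi g *m xi h) /\
     ~ (exists m : 'cV[int]_(n.+2), forall g, g \in G -> xi g = Phi g *m m - m)) ->
  (@im1 n) \notin I.
Proof.
move=> sGWD i0I [xi [hxi [_ hnc]]]; apply/negP => hI; apply: hnc.
exists (lvec im1) => g gG.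
have := subsetP sGWD g gG; rewrite inE => /andP [gWB ev].
rewrite inE in gWB; have hW := fun x => eqP (forallP gWB x).
have [c1 c0 cv] := Phi_col n g.
set E := \sum_(v | ilv v \in I) fcob (ilv v) g.
have hsum : \sum_(i in I) fcob i g = fcob im1 g + E.
  rewrite big_mkcond big_ord_recl big_ord_recl /= hI (negbTE i0I) add0r /E [in RHS]big_mkcond.
  by congr (_ + _); apply: eq_bigr.
have Eilv : forall i, E (ilv i) 0 =
    (if ilv (tau g i) \in I then (if i \in negs g then -1 else 1) else 0)
    - (if ilv i \in I then 1 else 0).
  move=> i; rewrite /E summxE.
  under eq_bigr do rewrite /fcob cv !mxE PhiLv_ilv (@tauinvE n g hW) (eqxx (0 : 'I_1)) andbT
     (inj_eq (@ilv_inj n)) natb eq_sym.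
  by rewrite sumrB sum_pick' sum_pick'.
have hv : forall i, E (ilv i) 0 = fcob im1 g (ilv i) 0.
  move=> i; have := congr1 (fun M : 'cV[int]_(n.+2) => M (ilv i) 0) (hxi g gG).
  rewrite hsum => h; rewrite [LHS]mxE [RHS]mxE Eilv fcob_im1_ilv in h.
  rewrite Eilv fcob_im1_ilv; move: h.
  case: (i \in negs g); case: (ilv (tau g i) \in I); case: (ilv i \in I); lia.
have phiE : phi E = 0.
  rewrite /E phi_sum big1 // => v _.
  by rewrite /fcob cv phiB phi_Phi_lv phi_lv_ilv subrr.
have phiF : phi (fcob im1 g) = 0.
  by rewrite /fcob c1 phiB phi_Phi_lm1 // phi_lv_im1 subrr.
have h0 : E i0 0 = fcob im1 g i0 0.
  have mxB : forall (A B : 'cV[int]_(n.+2)) r, (A - B) r 0 = A r 0 - B r 0.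
    by move=> A B r; rewrite !mxE.
  have : phi (E - fcob im1 g) = 0 by rewrite phiB phiE phiF subrr.
  rewrite /phi big1 ?addr0; last by move=> i _; rewrite mxB hv subrr.
  rewrite mxB => /eqP; rewrite mulf_eq0 /= subr_eq0 => /eqP.
  by [].
have h1 : E im1 0 = fcob im1 g im1 0.
  rewrite /E summxE big1; last first.
    move=> v _; rewrite /fcob cv mxE [X in _ + X]mxE PhiLv_im1 lvecE.
    by rewrite (eq_sym im1) (ilv_neq _ v).1 subrr.
  rewrite /fcob c1 /Phi_lm1 !mxE summxE big1 ?subr0.
    by rewrite !eqxx /= mulr0 addr0 subrr.
  by move=> v _; rewrite mxE (eq_sym im1) (ilv_neq _ v).1.
have hE : E = fcob im1 g.
  apply/matrixP => r c; rewrite ord1.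
  by case: (ord2_cases _ r) => [->|[->|[i ->]]].
suff : xi g = fcob im1 g by [].
have := hxi g gG; rewrite hsum hE => h2.
apply/matrixP => r c; have := congr1 (fun M : 'cV[int]_(n.+2) => M r c) h2.
rewrite [LHS]mxE [RHS]mxE => h.
have two : (2%Z : int) != 0 by [].
apply: (mulfI two); rewrite h.
by rewrite (_ : Posz 2 = 2%:R) // mulr_natl mulr2n.
Qed.
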